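(* Let $m\ge1$ and let $\mathcal{G}=\mathbb{Z}/2^m\mathbb{Z}$ (additive group). Let $e_1,\dots,e_t$ be a sequence of $t$ nonzero elements of $\mathcal{G}$ (repetitions allowed), and let \[ \mathcal{S}=\Big\{\sum_{j=1}^t\delta_je_j:\ \delta_j\in\{-1,0,1\}\Big\}\subseteq\mathcal{G}. \] (i) If $t\ge 2^{m-1}$, then $\overline{2^{m-1}}\in\mathcal{S}$. (ii) If $t=2^{m-1}-1$, then $\overline{2^{m-1}}\notin\mathcal{S}$ if and only if there exists $e\in(\mathbb{Z}/2^m\mathbb{Z})^*$ such that for each $j$, $e_j\equiv e$ or $e_j\equiv -e\pmod{2^m}$.
   Context: $\overline{i}$ denotes the residue class of $i$ modulo $2^m$. *)

(* Defs.v *)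
From mathcomp Require Import all_boot all_order all_algebra.
Set Implicit Arguments. Unset Strict Implicit. Unset Printing Implicit Defensive.
Import GRing.Theory.
Local Open Scope ring_scope.

Definition in_signed_sums (m t : nat) (e : 'I_t -> 'Z_(2 ^ m)) (x : 'Z_(2 ^ m)) : Prop :=
  exists d : 'I_t -> int,
    (forall j, d j \in [:: (-1)%R; 0%R; 1%R]) /\ x = \sum_(j < t) e j *~ d j.

(* Main.v *)
Require Import Defs.
From mathcomp Require Import all_boot all_order all_algebra.
From mathcomp Require Import zify ring.
From Stdlib Require Import Classical.
Import GRing.Theory Num.Theory.
Set Implicit Arguments. Unset Strict Implicit. Unset Printing Implicit Defensive.
Local Open Scope ring_scope.

Lemma par (a : int) : (exists q, a = 2 * q) \/ (exists q, a = 2 * q + 1).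
Proof.
have := divz_eq a 2; have := modz_ge0 a (isT : (2:int) != 0).
have := ltz_pmod a (isT : (0:int) < 2).
move: (a %/ 2)%Z (a %% 2)%Z => q r h1 h2 ->.
have [->|->] : r = 0 \/ r = 1 by lia.
  by left; exists q; lia.
by right; exists q; lia.
Qed.

Lemma ev2 (a : int) : (2 %| a)%Z <-> exists q, a = 2 * q.
Proof. split; first by case/dvdzP=> q ->; exists q; lia.
by case=> q ->; apply/dvdzP; exists q; lia. Qed.

Lemma od2 (a : int) : ~~ (2 %| a)%Z <-> exists q, a = 2 * q + 1.
Proof. split.
  by case: (par a) => // /ev2 ->.
case=> q ->; apply/negP => /ev2 [r]; lia. Qed.

Definition tri (d : int) := (d == -1) || (d == 0) || (d == 1).

Inductive SS : seq int -> int -> Prop :=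
| SS0 : SS [::] 0
| SSc a s y d : tri d -> SS s y -> SS (a :: s) (d * a + y).

Lemma triP d : tri d -> d = -1 \/ d = 0 \/ d = 1.
Proof. by rewrite /tri => /orP[/orP[]|] /eqP; auto. Qed.

Lemma triN d : tri d -> tri (- d).
Proof. by case/triP => [|[]] ->. Qed.

Lemma SS_zero s : SS s 0.
Proof. elim: s => [|a s IH]; first exact: SS0.
by have := @SSc a s 0 0 isT IH; rewrite mul0r add0r. Qed.

Lemma SS_opp s y : SS s y -> SS s (- y).
Proof. elim=> [|a s' y' d hd _ IH]; first by rewrite oppr0; exact: SS0.
by rewrite opprD -mulNr; apply: SSc => //; apply: triN. Qed.

Lemma SS_sc s y d : tri d -> SS s y -> SS s (d * y).
Proof. case/triP=> [|[]] -> h; rewrite ?mulN1r ?mul0r ?mul1r //.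
  exact: SS_opp. exact: SS_zero. Qed.

Lemma SS_cat s1 s2 y1 y2 : SS s1 y1 -> SS s2 y2 -> SS (s1 ++ s2) (y1 + y2).
Proof. move=> h; elim: h y2 => [|a s y d hd _ IH] y2 h2 /=; first by rewrite add0r.
by rewrite -addrA; apply: SSc => //; apply: IH. Qed.

Lemma SS_catI s1 s2 y : SS (s1 ++ s2) y -> exists y1 y2, [/\ y = y1 + y2, SS s1 y1 & SS s2 y2].
Proof. elim: s1 y => [|a s1 IH] y /=.
  by move=> h; exists 0, y; split => //; [rewrite add0r | exact: SS0].
move=> h; inversion h; subst.
case: (IH _ H3) => y1 [y2 [-> h1 h2]]; exists (d * a + y1), y2; split => //.
  by rewrite addrA.
exact: SSc. Qed.

Lemma SS_consI a s y : SS (a :: s) y -> exists d y', [/\ tri d, y = d * a + y' & SS s y'].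
Proof. by move=> h; inversion h; subst; exists d, y0. Qed.

Lemma SS_rem a s y d : a \in s -> tri d -> SS (rem a s) y -> SS s (d * a + y).
Proof.
elim: s y => [|x s IH] y //=; rewrite inE; case: eqP => [-> _|/eqP ne /= ins] hd h.
  by rewrite eqxx in h; exact: SSc.
rewrite eq_sym (negbTE ne) in h; case: (SS_consI h) => d' [y' [hd' -> h']].
have -> : d * a + (d' * x + y') = d' * x + (d * a + y') by lia.
by apply: SSc => //; apply: IH.
Qed.

Lemma SS_perm s s' y : perm_eq s s' -> SS s y -> SS s' y.
Proof.
elim: s s' y => [|a s IH] s' y.
  by move=> /perm_size; case: s' => // _ h.
move=> hp h; case: (SS_consI h) => d [y' [hd -> h']].
have ins : a \in s' by rewrite -(perm_mem hp) mem_head.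
apply: SS_rem => //; apply: (IH _ _ _ h').
by have := perm_trans hp (perm_to_rem ins); rewrite perm_cons.
Qed.

Lemma SS_unscale (f : int -> int) c s y : (forall a, a \in s -> c * f a = a) ->
  SS (map f s) y -> SS s (c * y).
Proof.
elim: s y => [|a s IH] y hf /=; first by move=> h; inversion h; rewrite mulr0; exact: SS0.
case/SS_consI => d [y' [hd -> h']].
have -> : c * (d * f a + y') = d * (c * f a) + c * y' by lia.
rewrite hf ?mem_head //; apply: SSc => //; apply: IH => // b hb.
by apply: hf; rewrite inE hb orbT.
Qed.

Definition pw (m : nat) : int := (2 ^ m)%N%:Z.
Lemma pwS m : pw m.+1 = 2 * pw m.
Proof. by rewrite /pw expnS PoszM. Qed.
Lemma pw_gt0 m : 0 < pw m.
Proof. by rewrite /pw ltz_nat expn_gt0. Qed.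

Lemma dv (d x : int) : (d %| x)%Z <-> exists q, x = q * d.
Proof. by split => /dvdzP. Qed.

Lemma dv2 m h : (pw m.+1 %| h)%Z <-> (pw m.+2 %| 2 * h)%Z.
Proof. rewrite !dv !pwS; set P := pw m; split => [[q ->]|[q]]; first by exists q; nia.
move=> e; exists q; nia. Qed.

Lemma pair_any m a b : ~~(2 %| a)%Z -> ~~(2 %| b)%Z ->
  exists h, (2 * h = a + b \/ 2 * h = a - b) /\ ~~ (pw m.+1 %| h)%Z.
Proof.
move=> /od2 [p ->] /od2 [q ->].
case: (boolP (pw m.+1 %| p + q + 1)%Z) => h1.
  exists (p - q); split; first by right; lia.
  apply/negP => /dv [r2 e2]; move: h1 => /dv [r1 e1].
  move: e1 e2; rewrite pwS; set P := pw m; nia.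
by exists (p + q + 1); split => //; left; lia.
Qed.

Lemma pair_even m a b : ~~(2 %| a)%Z -> ~~(2 %| b)%Z ->
  ~~ (pw m.+2 %| a - b)%Z -> ~~ (pw m.+2 %| a + b)%Z ->
  exists h, (2 * h = a + b \/ 2 * h = a - b) /\ (2 %| h)%Z /\ ~~ (pw m.+1 %| h)%Z.
Proof.
move=> /od2 [p ->] /od2 [q ->] hab hab'.
case: (par (p + q + 1)) => [[r er]|[r er]].
  exists (p + q + 1); split; first by left; lia.
  split; first by apply/ev2; exists r.
  apply/negP => /dv2; have -> : 2 * (p + q + 1) = 2 * p + 1 + (2 * q + 1) by lia.
  by apply/negP.
exists (p - q); split; first by right; lia.
split; first by apply/ev2; exists (p - r); lia.
apply/negP => /dv2; have -> : 2 * (p - q) = 2 * p + 1 - (2 * q + 1) by lia.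
by apply/negP.
Qed.

Lemma pair_SS a b h H s y : (2 * h = a + b \/ 2 * h = a - b) ->
  (forall y, SS H y -> SS s (2 * y)) -> SS (h :: H) y -> SS (a :: b :: s) (2 * y).
Proof.
move=> eh hH /SS_consI [d [y' [hd -> h']]].
have := hH _ h'; case: eh => eh h2.
  have -> : 2 * (d * h + y') = d * a + (d * b + 2 * y') by lia.
  by apply: SSc => //; apply: SSc.
have -> : 2 * (d * h + y') = d * a + ((- d) * b + 2 * y') by lia.
by apply: SSc => //; apply: SSc => //; apply: triN.
Qed.

Lemma halve_odd m O : (forall a, a \in O -> ~~ (2 %| a)%Z) ->
  exists H, [/\ size H = (size O)./2, (forall h, h \in H -> ~~ (pw m.+1 %| h)%Z)
           & (forall y, SS H y -> SS O (2 * y))].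
Proof.
elim: {O}(size O).+1 {-2}O (ltnSn (size O)) => // n IH [|a [|b O]] /= hs hO.
- exists [::]; split => //= y h; inversion h; exact: SS0.
- exists [::]; split => //= y h; inversion h; rewrite mulr0.
  by have := @SSc a [::] 0 0 isT SS0; rewrite mul0r addr0.
have ha := hO a (mem_head _ _).
have hb : ~~ (2 %| b)%Z by apply: hO; rewrite !inE eqxx orbT.
have [h [eh hh]] := pair_any m ha hb.
have hsO : (size O < n)%N by move: hs; rewrite !ltnS; apply: leq_trans.
have hOO : forall x, x \in O -> ~~ (2 %| x)%Z by move=> x hx; apply: hO; rewrite !inE hx !orbT.
have [H [sH hH sSH]] := IH O hsO hOO.
exists (h :: H); split => /=; first by rewrite sH.
  by move=> x; rewrite inE => /orP[/eqP ->|]; [|apply: hH].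
by move=> y; apply: pair_SS.
Qed.

Lemma halve_even m E : (forall a, a \in E -> (2 %| a)%Z /\ ~~ (pw m.+2 %| a)%Z) ->
  exists H, [/\ size H = size E, (forall h, h \in H -> ~~ (pw m.+1 %| h)%Z)
           & (forall y, SS H y -> SS E (2 * y))].
Proof.
move=> hE; exists (map (fun a => (a %/ 2)%Z) E); split.
- by rewrite size_map.
- move=> h /mapP [a ha ->]; have [/ev2 [q eq] hn] := hE a ha.
  apply/negP => /dv2; rewrite eq mulKz //.
  by apply/negP; rewrite -eq.
- move=> y; apply: SS_unscale => a ha; have [/ev2 [q ->] _] := hE a ha.
  by rewrite mulKz.
Qed.

Definition ev (x : int) : bool := (2 %| x)%Z.

Lemma halve m s : (forall a, a \in s -> ~~ (pw m.+2 %| a)%Z) ->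
  exists H, [/\ size H = ((count (predC ev) s)./2 + count ev s)%N,
     (forall h, h \in H -> ~~ (pw m.+1 %| h)%Z)
   & (forall y, SS H y -> SS s (2 * y))].
Proof.
move=> hs.
have h1 : forall a, a \in filter (predC ev) s -> ~~ (2 %| a)%Z.
  by move=> a; rewrite mem_filter => /andP[].
have h2 : forall a, a \in filter ev s -> (2 %| a)%Z /\ ~~ (pw m.+2 %| a)%Z.
  by move=> a; rewrite mem_filter => /andP[k1 k2]; split => //; apply: hs.
have [HO [sO hO sSO]] := halve_odd m h1.
have [HE [sE hE sSE]] := halve_even h2.
exists (HO ++ HE); split.
- by rewrite size_cat sO sE !size_filter.
- by move=> h; rewrite mem_cat => /orP[]; [apply: hO | apply: hE].
- move=> y /SS_catI [y1 [y2 [-> g1 g2]]].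
  have := SS_cat (sSO _ g1) (sSE _ g2).
  rewrite -mulrDr => h; apply: SS_perm h.
  by rewrite perm_catC perm_filterC.
Qed.

Definition reach m s := exists y, SS s y /\ (pw m.+1 %| y - pw m)%Z.

Lemma lift m H s : (forall y, SS H y -> SS s (2 * y)) -> reach m H -> reach m.+1 s.
Proof.
move=> hH [y [hy hd]]; exists (2 * y); split; first exact: hH.
move/dv2: hd; rewrite mulrBr -pwS //.
Qed.

Lemma partA m s : (forall a, a \in s -> ~~ (pw m.+1 %| a)%Z) -> (2 ^ m <= size s)%N ->
  reach m s.
Proof.
elim: m s => [|m IH] s hs hsz.
  case: s hs hsz => [|a s] // hs _; exists (1 * a + 0); split.
    by apply: SSc => //; exact: SS_zero.
  have := hs a (mem_head _ _); rewrite /pw expn1 => /od2 [q ->].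
  by apply/dv; exists q; lia.
have [H [sH hH sSH]] := halve hs.
apply: (lift sSH); apply: IH => //.
rewrite sH; move: hsz; rewrite -(count_predC ev s) expnS; lia.
Qed.

Lemma partB m s : (forall a, a \in s -> ~~ (pw m.+1 %| a)%Z) -> ((2 ^ m).-1 <= size s)%N ->
  has ev s -> reach m s.
Proof.
elim: m s => [|m IH] s hs hsz hev.
  case/hasP: hev => a /hs; rewrite /pw expn1 => h1 h2.
  by rewrite /ev in h2; rewrite h2 in h1.
have [H [sH hH sSH]] := halve hs.
apply: (lift sSH); apply: partA => //.
rewrite sH; move: hsz; rewrite -(count_predC ev s) expnS.
have : (0 < count ev s)%N by rewrite -has_count.
lia.
Qed.

Lemma arith1 P S S2 k l : ((2 * P).-1 <= S)%N -> S2 = S.-2 -> (l + k)%N = S2 ->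
  ((P).-1 <= (k./2 + l).+1)%N.
Proof. lia. Qed.

Lemma partC m s a b : (forall a, a \in s -> ~~ (pw m.+1 %| a)%Z) -> ((2 ^ m).-1 <= size s)%N ->
  a \in s -> b \in rem a s -> ~~ ev a -> ~~ ev b ->
  ~~ (pw m.+1 %| a - b)%Z -> ~~ (pw m.+1 %| a + b)%Z -> reach m s.
Proof.
case: m => [|m] hs hsz ha hb oa ob nab nab'.
  move: nab; rewrite /pw expn1; move: oa ob; rewrite /ev => /od2 [p ->] /od2 [q ->].
  by move/negP => []; apply/ev2; exists (p - q); lia.
have [h [eh [evh hh]]] := pair_even oa ob nab nab'.
set s2 := rem b (rem a s).
have hs2 : forall x, x \in s2 -> ~~ (pw m.+2 %| x)%Z.
  by move=> x /mem_rem /mem_rem; apply: hs.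
have [H [sH hH sSH]] := halve hs2.
have hp : perm_eq (a :: b :: s2) s.
  rewrite perm_sym; apply: (perm_trans (perm_to_rem ha)).
  by rewrite perm_cons; apply: perm_to_rem.
apply: (@lift _ (h :: H)).
  by move=> y hy; apply: (SS_perm hp); apply: pair_SS hy.
apply: partB => /=.
- by move=> x; rewrite inE => /orP[/eqP ->|]; [|apply: hH].
- rewrite sH; have e3 := count_predC ev s2.
  have e2 : size s2 = (size s).-2 by rewrite /s2 size_rem // size_rem.
  move: hsz; rewrite expnS => hsz; exact: (arith1 hsz e2 e3).
- by rewrite /= /ev evh.
Qed.

Lemma SS_pm N u s y : (forall a, a \in s -> (N %| a - u)%Z \/ (N %| a + u)%Z) -> SS s y ->
  exists k, [/\ - (size s)%:Z <= k, k <= (size s)%:Z & (N %| y - k * u)%Z].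
Proof.
move=> hs h; elim: h hs => [|a s' y' d hd _ IH] hs.
  by exists 0; split => //; rewrite mul0r subr0 dvdz0.
have [|k [k1 k2 hk]] := IH; first by move=> x hx; apply: hs; rewrite inE hx orbT.
have hd' := triP hd.
case: (hs a (mem_head _ _)) => /dv [q eq].
- exists (d + k); split.
  + move: k1; rewrite /= -addn1 PoszD; lia.
  + move: k2; rewrite /= -addn1 PoszD; lia.
  + move: hk => /dv [q' eq']; apply/dv; exists (d * q + q').
    have -> : d * a + y' - (d + k) * u = d * (a - u) + (y' - k * u) by ring.
    by rewrite eq eq'; ring.
- exists (k - d); split.
  + move: k1; rewrite /= -addn1 PoszD; lia.
  + move: k2; rewrite /= -addn1 PoszD; lia.
  + move: hk => /dv [q' eq']; apply/dv; exists (d * q + q').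
    have -> : d * a + y' - (k - d) * u = d * (a + u) + (y' - k * u) by ring.
    by rewrite eq eq'; ring.
Qed.

Lemma partD m u w s y : (forall a, a \in s -> (pw m.+1 %| a - u)%Z \/ (pw m.+1 %| a + u)%Z) ->
  (pw m.+1 %| w * u - 1)%Z -> (size s <= (2 ^ m).-1)%N -> SS s y ->
  ~ (pw m.+1 %| y - pw m)%Z.
Proof.
move=> hs hw hsz hy /dv [q1 e1].
have [k [k1 k2 /dv [q2 e2]]] := SS_pm hs hy.
move: hw => /dv [r e3].
have P0 := pw_gt0 m.
have hk : k < pw m /\ - pw m < k.
  by move: hsz k1 k2 P0; rewrite /pw; move: (size s) (2 ^ m)%N => a b; lia.
move: e1 e2 e3; rewrite pwS; set P := pw m => e1 e2 e3.
have e4 : k - w * P = 2 * P * (w * (q1 - q2) - k * r).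
  have -> : k - w * P = - k * (w * u - 1) + w * ((y - P) - (y - k * u)) by ring.
  by rewrite e1 e2 e3; ring.
case: (par w) => [[c ec]|[c ec]].
  have e3' : 2 * c * u = 1 + r * (2 * P) by rewrite -ec -e3; ring.
  have : 1 = 2 * (c * u - r * P).
    have -> : 2 * (c * u - r * P) = 2 * c * u - r * (2 * P) by ring.
    by rewrite e3'; ring.
  move: (c * u - r * P) => X; lia.
have e5 : k - P = 2 * P * (w * (q1 - q2) - k * r + c).
  by rewrite mulrDr -e4 ec; ring.
move: e5; set Z := (w * (q1 - q2) - k * r + c) => e5.
case: hk => hk1 hk2.
have [hZ|hZ] : 0 <= Z \/ Z <= -1 by lia.
  nia.
nia.
Qed.

Lemma zp0 N (hN : (1 < N)%N) (y : int) : ((y%:~R : 'Z_N) == 0) = (N%:Z %| y)%Z.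
Proof.
case: y => n.
  by rewrite -pmulrn -[_ == 0](inj_eq val_inj) /= val_Zp_nat.
by rewrite NegzE mulrNz oppr_eq0 -pmulrn -[_ == 0](inj_eq val_inj) /= val_Zp_nat // dvdzN.
Qed.

Lemma zpeq N (hN : (1 < N)%N) (x y : int) : ((x%:~R : 'Z_N) == y%:~R) = (N%:Z %| x - y)%Z.
Proof. by rewrite -zp0 // intrB subr_eq0. Qed.

Lemma zpval N (x : 'Z_N) : (((x : nat)%:Z)%:~R : 'Z_N) = x.
Proof. by rewrite -pmulrn natr_Zp. Qed.

Lemma tri_in d : tri d = (d \in [:: -1; 0; 1]).
Proof. by rewrite /tri !inE orbA. Qed.

Lemma sum_SS t (f : 'I_t -> int) r d : (forall j, tri (d j)) ->
  SS (map f r) (\sum_(j <- r) d j * f j).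
Proof.
move=> hd; elim: r => [|j r IH] /=; first by rewrite big_nil; exact: SS0.
by rewrite big_cons; apply: SSc.
Qed.

Lemma SS_sum t (f : 'I_t -> int) r y : uniq r -> SS (map f r) y ->
  exists d : 'I_t -> int, (forall j, tri (d j)) /\ y = \sum_(j <- r) d j * f j.
Proof.
elim: r y => [|j r IH] y /=.
  by move=> _ h; inversion h; exists (fun _ => 0); split => //; rewrite big_nil.
case/andP=> nj ur /SS_consI [dj [y' [hdj -> h']]].
have [d [hd ->]] := IH _ ur h'.
exists (fun i => if i == j then dj else d i); split.
  by move=> i; case: eqP.
rewrite big_cons eqxx; congr (_ + _).
apply: eq_big_seq => i hi; case: eqP => // ei.
by move: hi; rewrite ei (negbTE nj).
Qed.

Lemma sum_conv N t (e : 'I_t -> 'Z_N) (d : 'I_t -> int) :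
  \sum_(j < t) e j *~ d j =
  (\sum_(j <- index_enum 'I_t) d j * (e j : nat)%:Z)%:~R.
Proof.
rewrite mulrz_sumr; apply: eq_bigr => j _.
by rewrite -mulrzr intrM zpval mulrC.
Qed.

Lemma size_ie t : size (index_enum 'I_t) = t.
Proof.
have := deprecated_filter_index_enum (predT : pred 'I_t); rewrite filter_predT => ->.
by rewrite -cardE card_ord.
Qed.

Lemma unit_odd m' (x : 'Z_(2 ^ m'.+1)) : (x \is a GRing.unit) = odd (x : nat).
Proof.
have hN : (1 < 2 ^ m'.+1)%N by rewrite expnS; have := expn_gt0 2 m'; lia.
by rewrite -[x in LHS]natr_Zp unitZpE // coprime_pexpl // coprime2n.
Qed.

Lemma ev_nat (x : nat) : ev x%:Z = ~~ odd x.
Proof. exact: dvdn2. Qed.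

Unset Implicit Arguments.

Theorem lemma2p4 (m t : nat) (hm : (1 <= m)%N) (e : 'I_t -> 'Z_(2 ^ m))
    (he : forall j, e j != 0) :
  ((2 ^ m.-1 <= t)%N -> in_signed_sums e (2 ^ m.-1)%:R) /\
  (t = (2 ^ m.-1).-1 ->
     (~ in_signed_sums e (2 ^ m.-1)%:R <->
      exists2 u : 'Z_(2 ^ m), u \is a GRing.unit &
        forall j, e j = u \/ e j = - u)).
Proof.
case: m hm e he => // m' _ e he /=.
have hN : (1 < 2 ^ m'.+1)%N by rewrite expnS; have := expn_gt0 2 m'; lia.
pose f := fun j : 'I_t => ((e j : nat))%:Z.
have fE : forall j, ((f j)%:~R : 'Z_(2 ^ m'.+1)) = e j by move=> j; exact: zpval.
pose s := map f (index_enum 'I_t).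
have hs : size s = t by rewrite size_map size_ie.
have fin : forall j, f j \in s by move=> j; apply: map_f; exact: mem_index_enum.
have hnz : forall a, a \in s -> ~~ (pw m'.+1 %| a)%Z.
  move=> a /mapP [j _ ->]; by rewrite /pw -zp0 // fE.
have toS : reach m' s -> in_signed_sums e (2 ^ m')%:R.
  case=> y [hy hd]; have [d [hdt ey]] := SS_sum (index_enum_uniq _) hy.
  exists d; split; first by move=> j; rewrite -tri_in.
  rewrite sum_conv -ey; apply/eqP; rewrite eq_sym pmulrn zpeq //.
have fromS : in_signed_sums e (2 ^ m')%:R -> exists y, SS s y /\ (pw m'.+1 %| y - pw m')%Z.
  case=> d [hd ex]; exists (\sum_(j <- index_enum 'I_t) d j * f j); split.
    by apply: sum_SS => j; rewrite tri_in.
  by rewrite /pw -zpeq // -sum_conv -ex -pmulrn.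
split.
  by move=> ht; apply: toS; apply: partA => //; rewrite hs.
move=> ht; split.
  move=> hn; case: (classic (exists2 u : 'Z_(2 ^ m'.+1), u \is a GRing.unit &
        forall j, e j = u \/ e j = - u)) => // hne; exfalso; apply: hn.
  have hsz : ((2 ^ m').-1 <= size s)%N by rewrite hs ht.
  have [j0 _|none] := pickP (fun _ : 'I_t => true); last first.
    by case: hne; exists 1 => [|j]; [exact: unitr1 | have := none j].
  apply: toS.
  case: (boolP (e j0 \is a GRing.unit)) => hu0; last first.
    apply: partB => //; apply/hasP; exists (f j0) => //.
    by rewrite ev_nat -unit_odd.
  case: (boolP [exists j, (e j != e j0) && (e j != - e j0)]); last first.
    move/existsPn => hall; case: hne; exists (e j0) => // j.
    by move: (hall j); rewrite negb_and !negbK => /orP[/eqP|/eqP]; auto.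
  case/existsP => j /andP [n1 n2].
  case: (boolP (e j \is a GRing.unit)) => huj; last first.
    apply: partB => //; apply/hasP; exists (f j) => //.
    by rewrite ev_nat -unit_odd.
  apply: (@partC m' s (f j0) (f j)) => //.
  - apply: rem_mem => //.
  - by rewrite ev_nat -unit_odd negbK.
  - by rewrite ev_nat -unit_odd negbK.
  - by rewrite /pw -zpeq // !fE eq_sym.
  - by rewrite /pw -zp0 // intrD !fE addrC addr_eq0.
case=> u hu hj /fromS [y [hy hd]].
apply: (@partD m' ((u : nat)%:Z) ((u^-1 : 'Z_(2 ^ m'.+1)) : nat)%:Z s y) => //.
- move=> a /mapP [j _ ->]; case: (hj j) => ej.
    by left; rewrite /pw -zpeq // zpval fE ej.
  by right; rewrite /pw -zp0 // intrD zpval fE ej addNr.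
- by rewrite /pw -zpeq // intrM !zpval mulVr.
- by rewrite hs ht.
Qed.
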